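(* Let $\mathbf A,\mathbf B\in\mathbb C^{n\times n}$, $k=\operatorname{Ind}\mathbf A$, $r=\operatorname{rank}\mathbf A^{k}$, and for $l\ge 0$ let $\hat{\mathbf B}^{(l)}=\mathbf A^{l}\mathbf B=(\hat b^{(l)}_{ij})$ with $j$-th column $\hat{\mathbf b}^{(l)}_{.j}$ (so $\hat{\mathbf B}^{(0)}=\mathbf B=(b_{ij})$). Let \[\mathbf X(t)=\mathbf A^{D}\mathbf B+\sum_{s=1}^{k}\frac{(-1)^{s-1}}{s!}\left(\mathbf A^{s-1}\mathbf B-\mathbf A^{D}\mathbf A^{s}\mathbf B\right)t^{s}\] (the partial solution of $\mathbf X'+\mathbf A\mathbf X=\mathbf B$). Writing $\Delta=\sum_{\beta\in J_{r,n}}\left|(\mathbf A^{k+1})^{\beta}_{\beta}\right|$ and $N_{ij}(l)=\sum_{\beta\in J_{r,n}\{i\}}\left|\left(\mathbf A^{k+1}_{.i}(\hat{\mathbf b}^{(l)}_{.j})\right)^{\beta}_{\beta}\right|$, the entries of $\mathbf X(t)=(x_{ij})$ are, for all $i,j=1,\dots,n$, \[x_{ij}=\frac{N_{ij}(k)}{\Delta}+\sum_{s=1}^{k}\frac{(-1)^{s-1}}{s!}\left(\hat b^{(s-1)}_{ij}-\frac{N_{ij}(k+s)}{\Delta}\right)t^{s}.\]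
   Context: $\operatorname{Ind}\mathbf A$ is the smallest nonnegative $k$ with $\operatorname{rank}\mathbf A^{k+1}=\operatorname{rank}\mathbf A^{k}$; the Drazin inverse $\mathbf A^{D}$ is the unique $\mathbf X$ with $\mathbf A^{k+1}\mathbf X=\mathbf A^{k}$, $\mathbf X\mathbf A\mathbf X=\mathbf X$, $\mathbf A\mathbf X=\mathbf X\mathbf A$. $\mathbf M_{.i}(\mathbf c)$ denotes $\mathbf M$ with its $i$-th column replaced by $\mathbf c$. $J_{r,n}$ is the set of strictly increasing sequences of $r$ elements of $\{1,\dots,n\}$, $J_{r,n}\{i\}=\{\beta\in J_{r,n}:i\in\beta\}$, $\mathbf M^{\beta}_{\beta}$ is the principal submatrix indexed by $\beta$, $|\cdot|$ is the determinant. *)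

(* Defs.v *)
From HB Require Import structures.
From mathcomp Require Import all_boot all_order all_algebra.
Set Implicit Arguments. Unset Strict Implicit. Unset Printing Implicit Defensive.
Import Order.TTheory GRing.Theory Num.Theory.
Local Open Scope ring_scope.

Definition is_index (C : fieldType) (n : nat) (A : 'M[C]_n) (k : nat) : Prop :=
  \rank (A ^+ k.+1) = \rank (A ^+ k) /\
  (forall m : nat, (m < k)%N -> \rank (A ^+ m.+1) <> \rank (A ^+ m)).

Definition is_drazin (C : fieldType) (n : nat) (A X : 'M[C]_n) : Prop :=
  exists k, is_index A k /\
    A ^+ k.+1 *m X = A ^+ k /\ X *m A *m X = X /\ A *m X = X *m A.

Definition colrep (C : fieldType) (n : nat) (M : 'M[C]_n) (i : 'I_n)
  (c : 'cV[C]_n) : 'M[C]_n :=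
  \matrix_(p, q) if q == i then c p 0 else M p q.

(* |M^beta_beta| : principal minor of M indexed by beta (a strictly
   increasing sequence in {1..n}, represented as a finite set whose
   elements are enumerated in increasing order). *)
Definition pminor (C : fieldType) (n : nat) (M : 'M[C]_n) (beta : {set 'I_n}) : C :=
  \det (\matrix_(p < #|beta|, q < #|beta|)
          M (@enum_val _ (mem beta) p) (@enum_val _ (mem beta) q)).

Definition Delta (C : fieldType) (n : nat) (A : 'M[C]_n) (k r : nat) : C :=
  \sum_(beta : {set 'I_n} | #|beta| == r) pminor (A ^+ k.+1) beta.

Definition Nij (C : fieldType) (n : nat) (A B : 'M[C]_n) (k r : nat)
  (i j : 'I_n) (l : nat) : C :=
  \sum_(beta : {set 'I_n} | (#|beta| == r) && (i \in beta))
     pminor (colrep (A ^+ k.+1) i (col j (A ^+ l *m B))) beta.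

Definition Xt (C : fieldType) (n : nat) (A AD B : 'M[C]_n) (k : nat) (t : C)
  : 'M[C]_n :=
  AD *m B + \sum_(1 <= s < k.+1)
     (((-1) ^+ s.-1 / (s`!)%:R) * t ^+ s) *: (A ^+ s.-1 *m B - AD *m A ^+ s *m B).

(* Main.v *)
Require Import Defs.
From HB Require Import structures.
From mathcomp Require Import all_boot all_order all_algebra all_fingroup.
From mathcomp Require Import zify.
Set Implicit Arguments. Unset Strict Implicit. Unset Printing Implicit Defensive.
Import Order.TTheory GRing.Theory Num.Theory.
Local Open Scope ring_scope.

Definition gpminor (R : comPzRingType) (n : nat) (M : 'M[R]_n) (beta : {set 'I_n}) : R :=
  \det (\matrix_(p < #|beta|, q < #|beta|)
          M (@enum_val _ (mem beta) p) (@enum_val _ (mem beta) q)).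

Section Ext.
Variables (n : nat) (S : {set 'I_n}) (x0 : 'I_n) (h0 : x0 \in S).
Local Notation m := #|S|.
Local Notation e := (@enum_val _ (mem S)).
Local Notation rk := (enum_rank_in h0).

Definition extf (t : 'S_m) (p : 'I_n) : 'I_n := if p \in S then e (t (rk p)) else p.

Lemma extf_inj t : injective (extf t).
Proof.
move=> p q; rewrite /extf.
case: ifP => pS; case: ifP => qS.
- move/enum_val_inj/perm_inj => h.
  by rewrite -(enum_rankK_in h0 pS) -(enum_rankK_in h0 qS) h.
- by move=> h; move: qS; rewrite -h enum_valP.
- by move=> h; move: pS; rewrite h enum_valP.
- by [].
Qed.

Definition ext t : 'S_n := perm (@extf_inj t).

Lemma extE t p : ext t p = extf t p.
Proof. by rewrite permE. Qed.

Lemma ext_on t : perm_on S (ext t).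
Proof.
apply/subsetP => p; rewrite inE extE /extf; case: ifP => //.
by rewrite eqxx.
Qed.

Lemma ext_val t a : ext t (e a) = e (t a).
Proof. by rewrite extE /extf enum_valP enum_valK_in. Qed.

Lemma extM s t : ext (s * t)%g = (ext s * ext t)%g.
Proof.
apply/permP => p; rewrite permM !extE /extf.
case: ifP => pS; last by rewrite pS.
by rewrite enum_valP enum_valK_in permM.
Qed.

Lemma ext1 : ext 1 = 1%g.
Proof.
apply/permP => p; rewrite perm1 extE /extf; case: ifP => // pS.
by rewrite perm1 enum_rankK_in.
Qed.

Lemma ext_tperm a b : ext (tperm a b) = tperm (e a) (e b).
Proof.
apply/permP => p; rewrite extE /extf; case: ifP => pS; last first.
  rewrite tpermD //; apply/eqP => h; move: pS; by rewrite -h enum_valP.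
rewrite -{2}(enum_rankK_in h0 pS).
case: (tpermP a b (rk p)) => [->|->|/eqP ha /eqP hb].
- by rewrite tpermL.
- by rewrite tpermR.
- rewrite tpermD //; apply/eqP => /enum_val_inj; apply/eqP; by rewrite eq_sym.
Qed.

Lemma odd_ext t : odd_perm (ext t) = odd_perm t.
Proof.
case: (prod_tpermP t) => ts -> hts.
rewrite (big_morph ext extM ext1) odd_perm_prod //.
rewrite (eq_bigr (fun u => tperm (e u.1) (e u.2))); last by move=> u _; rewrite ext_tperm.
rewrite -(big_map (fun u => (e u.1, e u.2)) xpredT (fun u => tperm u.1 u.2)).
rewrite odd_perm_prod ?size_map //.
rewrite all_map; apply: sub_all hts => u /=.
by apply: contra => /eqP/enum_val_inj ->.
Qed.

Definition resf (s : 'S_n) (a : 'I_m) : 'I_m := rk (s (e a)).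

Lemma resf_inj s : perm_on S s -> injective (resf s).
Proof.
move=> hs a b; rewrite /resf => h.
have := enum_rankK_in h0 (x:= s (e a)); rewrite perm_closed // enum_valP => /(_ isT).
rewrite h enum_rankK_in ?perm_closed ?enum_valP //.
by move/perm_inj/enum_val_inj.
Qed.


Definition resf' (s : 'S_n) (a : 'I_m) : 'I_m := if perm_on S s then resf s a else a.

Lemma resf'_inj s : injective (resf' s).
Proof. move=> a b; rewrite /resf'; case: ifP => [hs|//]; exact: resf_inj. Qed.

Definition res s : 'S_m := perm (@resf'_inj s).

Lemma extK s : perm_on S s -> ext (res s) = s.
Proof.
move=> hs; apply/permP => p; rewrite extE /extf.
case: ifP => pS; last by rewrite (out_perm hs) // pS.
rewrite permE /resf' hs /resf enum_rankK_in ?enum_rankK_in //.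
by rewrite perm_closed // enum_rankK_in.
Qed.

Lemma resK t : res (ext t) = t.
Proof.
apply/permP => a; rewrite permE /resf' ext_on /resf ext_val.
by rewrite enum_valK_in.
Qed.

End Ext.

Lemma gpminorE (R : comPzRingType) n (M : 'M[R]_n) (S : {set 'I_n}) :
  gpminor M S = \sum_(s : 'S_n | perm_on S s) (-1) ^+ s * \prod_(p in S) M p (s p).
Proof.
have [S0 | /set0Pn [x0 h0]] := eqVneq S set0.
  rewrite /gpminor /determinant.
  have c0 : #|S| = 0%N by rewrite S0 cards0.
  have Pe (t : 'S_#|S|) : t = 1%g.
    by apply/permP => -[a ha]; exfalso; move: ha; rewrite c0.
  rewrite (big_pred1 1%g); last by move=> t; rewrite /= (Pe t) eqxx.
  rewrite [in RHS](big_pred1 1%g); last first.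
    move=> s /=; apply/idP/eqP => [hs|->]; last exact: perm_on1.
    apply/permP => p; rewrite perm1 (out_perm hs) // S0 inE //.
  rewrite !odd_perm1 !big_pred0 //.
    by move=> p; rewrite S0 inE.
  by case=> a ha; exfalso; move: ha; rewrite c0.
rewrite /gpminor /determinant.
rewrite (reindex_onto (ext h0) (res h0)); last by move=> s hs; rewrite extK.
apply: eq_big => [t|t _]; first by rewrite ext_on resK eqxx.
rewrite odd_ext (big_enum_val (A := mem S)) /=.
congr (_ * _); apply: eq_bigr => a _; by rewrite mxE ext_val.
Qed.

Lemma prod_delta (R : comPzRingType) n (S : {set 'I_n}) (s : 'S_n) :
  \prod_(p in ~: S) ((p == s p)%:R : R) = (perm_on S s)%:R.
Proof.
case: (boolP (perm_on S s)) => hs.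
  by apply: big1 => p; rewrite inE => pS; rewrite (out_perm hs pS) eqxx.
have [p] : exists p, (p \notin S) && (s p != p).
  move: hs; rewrite /perm_on => /subsetPn [p]; rewrite inE => h1 h2.
  by exists p; rewrite h1 h2.
case/andP => pS hp; rewrite (bigD1 p) ?inE //= eq_sym (negPf hp) mul0r //.
Qed.

Lemma det_diag_add (R : comPzRingType) n (d : 'I_n -> R) (M : 'M[R]_n) :
  \det (\matrix_(p, q) ((p == q)%:R * d p) + M) =
  \sum_(S : {set 'I_n}) (\prod_(p in ~: S) d p) * gpminor M S.
Proof.
rewrite /determinant.
under eq_bigr => s _.
  under eq_bigr => p _ do rewrite !mxE addrC.
  rewrite bigA_distr big_distrr /=.
  over.
rewrite exchange_big /=; apply: eq_bigr => S _.
rewrite gpminorE big_distrr /= [RHS]big_mkcond /=; apply: eq_bigr => s _.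
have -> : \prod_p (if p \in S then M p (s p) else (p == s p)%:R * d p) =
    (\prod_(p in S) M p (s p)) * \prod_(p in ~: S) ((p == s p)%:R * d p).
  rewrite (bigID (mem S)) /=; congr (_ * _).
    by apply: eq_bigr => p; case: (p \in S).
  apply: eq_big => [p|p]; first by rewrite inE.
  by case: (p \in S).
rewrite big_split /= prod_delta.
case: (perm_on S s); last by rewrite !(mul0r, mulr0).
by rewrite [true%:R]/= mul1r mulrA mulrC.
Qed.

Lemma gpminor_rank (F : fieldType) n (M : 'M[F]_n) (S : {set 'I_n}) :
  (\rank M < #|S|)%N -> gpminor M S = 0.
Proof.
move=> hr; apply/eqP; apply: contraLR hr; rewrite /gpminor => hd; rewrite -leqNgt.
set e := @enum_val _ (mem S).
have E : \matrix_(p < #|S|, q < #|S|) M (e p) (e q) = mxsub e e M.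
  by apply/matrixP => p q; rewrite !mxE.
rewrite E in hd.
have hu : mxsub e e M \in unitmx by rewrite unitmxE unitfE.
rewrite -{1}(mxrank_unit hu).
rewrite -[M]mul1mx mxsub_mul; apply: leq_trans (mxrankM_maxr _ _) _.
by rewrite -[M]mulmx1 -mulmx_colsub mul1mx mulmx1; apply: mxrankM_maxl.
Qed.

Definition gcolrep (R : comPzRingType) (n : nat) (M : 'M[R]_n) (i : 'I_n)
  (c : 'cV[R]_n) : 'M[R]_n :=
  \matrix_(p, q) if q == i then c p 0 else M p q.

Lemma colrep_det (R : comPzRingType) n (P : 'M[R]_n) i c :
  \det (gcolrep P i c) = \sum_p c p 0 * cofactor P p i.
Proof.
rewrite (expand_det_col _ i); apply: eq_bigr => p _.
rewrite !mxE eqxx; congr (_ * _).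
rewrite /cofactor; congr (_ * \det _).
apply/matrixP => a b; rewrite !mxE.
by rewrite eq_sym (negPf (neq_lift i b)).
Qed.

Lemma colrep_mul (R : comPzRingType) n (P : 'M[R]_n) i (z : 'cV[R]_n) :
  \det (gcolrep P i (P *m z)) = z i 0 * \det P.
Proof.
rewrite colrep_det.
under eq_bigr => p _ do rewrite mxE big_distrl /=.
rewrite exchange_big /=.
have E q : \sum_p P p q * z q 0 * cofactor P p i = z q 0 * ((\det P)%:M i q).
  have := congr1 (fun A : 'M[R]_n => A i q) (mul_adj_mx P); rewrite !mxE => <-.
  rewrite big_distrr /=; apply: eq_bigr => p _; rewrite !mxE.
  by rewrite mulrC mulrA [z q 0 * _]mulrC -mulrA mulrC mulrA.
under eq_bigr => q _ do rewrite E.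
rewrite (bigD1 i) //= big1 ?addr0; first by rewrite !mxE eqxx mulr1n.
by move=> q hq; rewrite !mxE eq_sym (negPf hq) mulr0n mulr0.
Qed.

Lemma colrep_lin (R : comPzRingType) n (P : 'M[R]_n) i (c1 c2 : 'cV[R]_n) a :
  \det (gcolrep P i (c1 - a *: c2)) = \det (gcolrep P i c1) - a * \det (gcolrep P i c2).
Proof.
rewrite !colrep_det big_distrr -sumrB; apply: eq_bigr => p _.
by rewrite !mxE /= mulrBl mulrA.
Qed.

Lemma colrep_mulE (R : comPzRingType) n (M : 'M[R]_n) i (y : 'cV[R]_n) :
  gcolrep M i (M *m y) = M *m gcolrep 1%:M i y.
Proof.
apply/matrixP => p q; rewrite /gcolrep !mxE; case: eqP => hq.
  by apply: eq_bigr => k _; rewrite !mxE hq eqxx.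
have := congr1 (fun A : 'M[R]_n => A p q) (mulmx1 M); rewrite !mxE => {1}<-.
by apply: eq_bigr => k _; rewrite !mxE; move/eqP/negPf: hq => ->.
Qed.

Section Poly.
Variables (F : fieldType) (n : nat).
Local Notation XI := (\matrix_(p, q) ((p == q)%:R * 'X) : 'M[{poly F}]_n).
Local Notation "A ^P" := (map_mx polyC A) (at level 2, format "A ^P").

Lemma gpminor_map (M : 'M[F]_n) S : gpminor M^P S = (gpminor M S)%:P.
Proof.
rewrite /gpminor -det_map_mx; congr (\det _).
by apply/matrixP => p q; rewrite !mxE.
Qed.

Lemma cardC_ord (S : {set 'I_n}) : #|~: S| = (n - #|S|)%N.
Proof. by rewrite cardsCs setCK card_ord. Qed.

Lemma detX (M : 'M[F]_n) :
  \det (XI + M^P) = \sum_(S : {set 'I_n}) 'X^(n - #|S|) * (gpminor M S)%:P.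
Proof.
rewrite (det_diag_add (fun _ => 'X)); apply: eq_bigr => S _.
by rewrite prodr_const cardC_ord gpminor_map.
Qed.

Lemma detX_col (M : 'M[F]_n) (c : 'cV[F]_n) i :
  \det (gcolrep (XI + M^P) i c^P) =
  \sum_(S : {set 'I_n} | i \in S) 'X^(n - #|S|) * (gpminor (gcolrep M i c) S)%:P.
Proof.
have -> : gcolrep (XI + M^P) i c^P =
   \matrix_(p, q) ((p == q)%:R * (if p == i then 0 else 'X)) + (gcolrep M i c)^P.
  apply/matrixP => p q; rewrite /gcolrep !mxE.
  case: eqP => [->|hq]; first by case: (p == i); rewrite /= ?mulr0 ?mul0r ?add0r.
  case: (eqVneq p q) => [->|hpq]; last by rewrite /= !mul0r.
  by move/eqP/negPf: hq => ->.
rewrite det_diag_add [RHS]big_mkcond /=; apply: eq_bigr => S _.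
rewrite gpminor_map; case: ifP => iS.
  rewrite (eq_bigr (fun _ => 'X)) ?prodr_const ?cardC_ord //.
  by move=> p; rewrite inE => pS; case: eqP => // hp; move: pS; rewrite hp iS.
by rewrite (bigD1 i) ?inE ?iS //= eqxx mul0r mul0r.
Qed.

Lemma FX (M : 'M[F]_n) r (P : pred {set 'I_n}) : (\rank M <= r)%N -> (r <= n)%N ->
  \sum_(S | P S) 'X^(n - #|S|) * (gpminor M S)%:P =
  'X^(n - r) * \sum_(S | P S) 'X^(r - #|S|) * (gpminor M S)%:P.
Proof.
move=> hr hn; rewrite big_distrr /=; apply: eq_bigr => S _.
case: (leqP #|S| r) => hS.
  by rewrite mulrA -exprD; congr ('X^_ * _); rewrite addnBA // subnK.
rewrite gpminor_rank ?mul0r ?mulr0 //; lia.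
Qed.

Lemma EV (M : 'M[F]_n) r (P : pred {set 'I_n}) : (\rank M <= r)%N ->
  (\sum_(S | P S) 'X^(r - #|S|) * (gpminor M S)%:P).[0] =
  \sum_(S | P S && (#|S| == r)) gpminor M S.
Proof.
move=> hr; rewrite horner_sum [RHS]big_mkcondr /=; apply: eq_bigr => S _.
rewrite hornerM hornerXn hornerC.
case: (ltngtP #|S| r) => hS.
- by rewrite expr0n subn_eq0 leqNgt hS mul0r.
- by rewrite gpminor_rank ?mulr0 //; exact: leq_ltn_trans hr hS.
- by rewrite hS subnn expr0 mul1r.
Qed.

Lemma XIE : XI = 'X%:M.
Proof. by apply/matrixP => p q; rewrite !mxE mulr_natl. Qed.

Lemma detX_fact (M : 'M[F]_n) r : (\rank M <= r)%N -> (r <= n)%N ->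
  \det (XI + M^P) = 'X^(n - r) *
     \sum_(S : {set 'I_n}) 'X^(r - #|S|) * (gpminor M S)%:P.
Proof. by move=> h1 h2; rewrite detX (FX xpredT h1 h2). Qed.


Lemma cramer (M : 'M[F]_n) (x y : 'cV[F]_n) i : x = M *m y ->
  \sum_(S : {set 'I_n} | (#|S| == \rank M) && (i \in S)) gpminor (gcolrep M i (M *m x)) S
   = x i 0 * \sum_(S : {set 'I_n} | #|S| == \rank M) gpminor M S.
Proof.
move=> hx; set r := \rank M.
have rn : (r <= n)%N by apply: rank_leq_row.
set P := XI + M^P.
have key : \det (gcolrep P i (M *m x)^P) = (x i 0)%:P * \det P - 'X * \det (gcolrep P i x^P).
  have -> : (M *m x)^P = P *m x^P - 'X *: x^P.
    by rewrite /P mulmxDl XIE mul_scalar_mx map_mxM addrC addKr.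
  by rewrite colrep_lin colrep_mul mxE.
have r1 : (\rank (gcolrep M i (M *m x)) <= r)%N by rewrite colrep_mulE mxrankM_maxl.
have r2 : (\rank (gcolrep M i x) <= r)%N by rewrite hx colrep_mulE mxrankM_maxl.
move: key; rewrite /P detX_col (FX _ r1 rn) detX_col (FX _ r2 rn) (detX_fact (leqnn _) rn).
rewrite -/r [(x i 0)%:P * _]mulrCA ['X * _]mulrCA -mulrBr => /(mulfI (expf_neq0 _ (negbT (polyX_eq0 _)))) /(congr1 (horner^~ 0)).
rewrite !hornerE !EV // => h.
apply: etrans (etrans _ h) _; first by apply: eq_bigl => S; rewrite andbC.
by rewrite subr0.
Qed.
End Poly.

Section Poly2.
Variables (F : fieldType) (n : nat).
Local Notation XI := (\matrix_(p, q) ((p == q)%:R * 'X) : 'M[{poly F}]_n).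
Local Notation "A ^P" := (map_mx polyC A) (at level 2, format "A ^P").

Lemma delta_ne0 (M K : 'M[F]_n) : M *m K = 0 -> (M + K) \in unitmx ->
  \sum_(S : {set 'I_n} | #|S| == \rank M) gpminor M S != 0.
Proof.
move=> MK0 uMK; set r := \rank M.
have rn : (r <= n)%N by apply: rank_leq_row.
have rK : (\rank K <= n - r)%N.
  have : (M <= kermx K)%MS by rewrite sub_kermx MK0.
  move/mxrankS; rewrite mxrank_ker /r; have := rank_leq_row K; lia.
have E : (XI + M^P) *m (XI + K^P) = 'X *: (XI + (M + K)^P).
  rewrite XIE mulmxDl !mulmxDr -!map_mxM MK0 map_mx0 addr0.
  rewrite !mul_scalar_mx mul_mx_scalar map_mxD !scalerDr -addrA; congr (_ + _).
  by rewrite addrC.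
have := congr1 determinant E.
rewrite det_mulmx detZ (detX_fact (leqnn _) rn) (detX_fact rK (leq_subr _ _)).
rewrite -/r subKn // mulrACA -exprD subnK //.
move=> /(mulfI (expf_neq0 _ (negbT (polyX_eq0 _)))) /(congr1 (horner^~ 0)).
rewrite hornerM !EV // => h.
have hW : (\det (XI + (M + K)^P)).[0] = \det (M + K).
  rewrite -horner_evalE -det_map_mx; congr (\det _).
  by apply/matrixP => p q; rewrite !mxE /= /horner_eval !hornerE.
move: uMK; rewrite unitmxE unitfE -hW -h /=.
by apply: contraNneq => ->; rewrite mul0r.
Qed.
End Poly2.

Lemma index_uniq (F : fieldType) n (A : 'M[F]_n) k k' :
  is_index A k -> is_index A k' -> k = k'.
Proof.
move=> [h1 h2] [h1' h2']; case: (ltngtP k k') => // hk.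
- by have := h2' _ hk; rewrite h1.
- by have := h2 _ hk; rewrite h1'.
Qed.

Section Main.
Variables (F : fieldType) (n : nat) (A D : 'M[F]_n) (k : nat).
Hypotheses (h1 : A ^+ k.+1 * D = A ^+ k) (h2 : D * A * D = D) (hc : A * D = D * A).

Lemma ADD : A * D * D = D.
Proof. by rewrite hc h2. Qed.

Lemma E_idem : (A * D) ^+ 2 = A * D.
Proof. by rewrite expr2 -mulrA [D * (A * D)]mulrA h2. Qed.

Lemma E_pow m : (A * D) ^+ m.+1 = A * D.
Proof.
elim: m => [|m ih]; first by rewrite expr1.
by rewrite exprS ih -expr2 E_idem.
Qed.

Lemma MG : A ^+ k.+1 * D ^+ k.+1 = A * D.
Proof. by rewrite -exprMn_comm ?E_pow. Qed.

Lemma MK0 : A ^+ k.+1 * (1 - A * D) = 0.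
Proof. by rewrite mulrBr mulr1 hc mulrA h1 -exprSr subrr. Qed.
Lemma unitMK : (A ^+ k.+1 + (1 - A * D)) \in unitmx.
Proof.
have EG : A * D * D ^+ k.+1 = D ^+ k.+1 by rewrite exprS mulrA ADD.
have KK : (1 - A * D) * (1 - A * D) = 1 - A * D.
  by rewrite mulrBl mul1r mulrBr mulr1 -expr2 E_idem subrr subr0.
have P : (A ^+ k.+1 + (1 - A * D)) *m (D ^+ k.+1 + (1 - A * D)) = 1%:M.
  rewrite mulmxE mulrDl (mulrDr (A ^+ k.+1)) (mulrDr (1 - A * D)) MG MK0 KK addr0 mulrBl mul1r EG subrr add0r.
  by rewrite addrC subrK.
by case: (mulmx1_unit P).
Qed.

Lemma MD2 : A ^+ k.+1 * D ^+ k.+2 = D.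
Proof. by rewrite [D ^+ k.+2]exprSr mulrA MG ADD. Qed.
End Main.


Unset Implicit Arguments.

Theorem theorem5p2 (C : numClosedFieldType) (n : nat) (A B AD : 'M[C]_n)
  (k r : nat) (t : C) :
  is_index A k -> r = \rank (A ^+ k) -> is_drazin A AD ->
  Delta A k r != 0 /\
  forall i j : 'I_n,
    Xt A AD B k t i j =
      Nij A B k r i j k / Delta A k r +
      \sum_(1 <= s < k.+1)
        ((-1) ^+ s.-1 / (s`!)%:R) *
        ((A ^+ s.-1 *m B) i j - Nij A B k r i j (k + s) / Delta A k r) * t ^+ s.
Proof.
move=> hk hr [k' [hk' [d1 [d2 d3]]]].
have ek : k' = k := index_uniq hk' hk.
subst k'.
rewrite !mulmxE in d1 d2 d3.
set M := A ^+ k.+1.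
have rM : \rank M = r by rewrite hr; case: hk.
have hD : Delta A k r = \sum_(S : {set 'I_n} | #|S| == \rank M) gpminor M S by rewrite rM.
have D0 : Delta A k r != 0.
  rewrite hD; apply: (@delta_ne0 _ _ _ (1 - A * AD)); last exact: unitMK.
  by rewrite mulmxE MK0.
have NE s i j : Nij A B k r i j (k + s) / Delta A k r = (AD *m A ^+ s *m B) i j.
  set x := col j (AD *m A ^+ s *m B).
  have hx : x = M *m col j (AD ^+ k.+2 *m A ^+ s *m B).
    have e2 : M * AD ^+ k.+2 = AD by apply: MD2.
    rewrite /x !colE [RHS]mulmxA; congr (_ *m _); rewrite !mulmxE.
    transitivity (M * AD ^+ k.+2 * A ^+ s * B); first by rewrite e2.
    by rewrite -!mulrA.
  have hc : col j (A ^+ (k + s) *m B) = M *m x.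
    rewrite /x !colE [RHS]mulmxA; congr (_ *m _); rewrite !mulmxE.
    transitivity (M * AD * A ^+ s * B); last by rewrite -!mulrA.
    by rewrite /M d1 exprD.
  have Cr := cramer i hx.
  rewrite rM in Cr.
  rewrite /Nij hc.
  rewrite [X in X / _](_ : _ = x i 0 * Delta A k r); last exact: Cr.
  by rewrite mulfK // /x !mxE.
split => // i j.
have N0 := NE 0%N i j; rewrite addn0 expr0 mulmx1 in N0.
rewrite /Xt mxE summxE -N0.
congr (_ + _); apply: eq_big_nat => s _.
rewrite mxE [X in _ * X]mxE [(- (_ : 'M_n)) i j]mxE NE.
by rewrite mulrAC.
Qed.
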